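(* Let $\mathcal A=(\Sigma,Q^\mathcal A,q^\mathcal A_0,\Omega^\mathcal A,\Delta^\mathcal A)$ and $\mathcal B=(\Sigma,Q^\mathcal B,q^\mathcal B_0,\Omega^\mathcal B,\Delta^\mathcal B)$ be nondeterministic parity tree automata with $L(\mathcal A)\cap L(\mathcal B)=\emptyset$. Then there is a function $\mathcal P:\bigcup_{a\in\Sigma}\Delta^\mathcal A(a)\times\Delta^\mathcal B(a)\to\{\mathsf L,\mathsf R\}$ such that Pathfinder wins every play of the disjointness game $G_\cap(\mathcal A,\mathcal B)$ in which she always plays $d_i:=\mathcal P(\delta^\mathcal A_i,\delta^\mathcal B_i)$.
   Context: Trees are maps $t:\{\mathsf L,\mathsf R\}^*\to\Sigma$. A nondeterministic parity tree automaton $(\Sigma,Q,q_0,\Omega,\Delta)$ has $\Omega:Q\to\mathbb N$ and $\Delta\subseteq Q\times\Sigma\times Q\times Q$; a run on $t$ is $\rho$ with $\rho(\epsilon)=q_0$ and $(\rho(u),t(u),\rho(u\mathsf L),\rho(u\mathsf R))\in\Delta$, accepting if on every branch the maximal priority seen infinitely often is even; $L(\cdot)$ denotes the recognised language. The priority of a transition $(q,a,q_\mathsf L,q_\mathsf R)$ is $\Omega(q)$, and an infinite sequence of transitions is accepting if the maximal priority occurring infinitely often is even. $\Delta(a)$ is the set of transitions over letter $a$, and $\Delta(q,a)$ those from state $q$ over $a$. All states of the automata are assumed productive ($L(\mathcal A_q)\neq\emptyset$ for each state $q$, where $\mathcal A_q$ has initial state $q$). Disjointness game $G_\cap(\mathcal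 A,\mathcal B)$: positions are pairs $(q^\mathcal A_i,q^\mathcal B_i)$, starting at $(q_0^\mathcal A,q_0^\mathcal B)$. In round $i$, player Automaton chooses a letter $a_i\in\Sigma$, a transition $\delta^\mathcal A_i=(q^\mathcal A_i,a_i,q^\mathcal A_{\mathsf L,i},q^\mathcal A_{\mathsf R,i})\in\Delta^\mathcal A(q^\mathcal A_i,a_i)$ and a transition $\delta^\mathcal B_i=(q^\mathcal B_i,a_i,q^\mathcal B_{\mathsf L,i},q^\mathcal B_{\mathsf R,i})\in\Delta^\mathcal B(q^\mathcal B_i,a_i)$; then player Pathfinder chooses $d_i\in\{\mathsf L,\mathsf R\}$; the next position is $(q^\mathcal A_{d_i,i},q^\mathcal B_{d_i,i})$. Automaton wins an infinite play iff both sequences $\delta^\mathcal A_0\delta^\mathcal A_1\cdots$ and $\delta^\mathcal B_0\delta^\mathcal B_1\cdots$ are accepting; otherwise Pathfinder wins. *)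

(* Defs.v *)
From mathcomp Require Import all_boot.
Set Implicit Arguments. Unset Strict Implicit. Unset Printing Implicit Defensive.

Inductive dir := DL | DR.

Definition tree (Sigma : Type) := seq dir -> Sigma.

Record npta (Sigma : finType) := NPTA {
  state : finType;
  q0 : state;
  Omega : state -> nat;
  Delta : state -> Sigma -> state -> state -> Prop }.

Record trans (Q Sigma : Type) := Trans { tsrc : Q; tlet : Sigma; tL : Q; tR : Q }.

Definition transition (Sigma : finType) (A : npta Sigma) := trans (state A) Sigma.

Definition in_Delta (Sigma : finType) (A : npta Sigma) (d : transition A) : Prop :=
  Delta d.(tsrc) d.(tlet) d.(tL) d.(tR).

Definition tgt (Q Sigma : Type) (d : trans Q Sigma) (x : dir) : Q :=
  match x with DL => tL d | DR => tR d end.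

(* Parity condition on a priority sequence: the maximal priority occurring
   infinitely often is even (s has finite range in our uses). *)
Definition parity_acc (s : nat -> nat) : Prop :=
  exists m, ~~ odd m /\ (forall N, exists n, N <= n /\ s n = m)
            /\ (exists N, forall n, N <= n -> s n <= m).

Definition is_run_from (Sigma : finType) (A : npta Sigma) (q : state A)
    (t : tree Sigma) (rho : seq dir -> state A) : Prop :=
  rho [::] = q /\
  forall u, Delta (rho u) (t u) (rho (rcons u DL)) (rho (rcons u DR)).

Definition prefix (pi : nat -> dir) (n : nat) : seq dir := mkseq pi n.

Definition accepting_run (Sigma : finType) (A : npta Sigma)
    (rho : seq dir -> state A) : Prop :=
  forall pi : nat -> dir, parity_acc (fun n => Omega (rho (prefix pi n))).

Definition accepts_from (Sigma : finType) (A : npta Sigma) (q : state A)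
    (t : tree Sigma) : Prop :=
  exists rho, is_run_from q t rho /\ accepting_run rho.

Definition accepts (Sigma : finType) (A : npta Sigma) (t : tree Sigma) : Prop :=
  accepts_from (q0 A) t.

Definition productive (Sigma : finType) (A : npta Sigma) : Prop :=
  forall q : state A, exists t, accepts_from q t.

Definition trans_seq_acc (Sigma : finType) (A : npta Sigma)
    (ds : nat -> transition A) : Prop :=
  parity_acc (fun i => Omega (tsrc (ds i))).

(* An infinite play of G_cap(A,B) in which Pathfinder always plays
   d_i := P(delta^A_i, delta^B_i); described by the sequences of transitions
   chosen by Automaton (letter a_i = common letter of the two transitions). *)
Definition play_following (Sigma : finType) (A B : npta Sigma)
    (P : transition A -> transition B -> dir)
    (dA : nat -> transition A) (dB : nat -> transition B) : Prop :=
  tsrc (dA 0) = q0 A /\ tsrc (dB 0) = q0 B /\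
  forall i,
    [/\ in_Delta (dA i), in_Delta (dB i), tlet (dA i) = tlet (dB i),
        tsrc (dA i.+1) = tgt (dA i) (P (dA i) (dB i)) &
        tsrc (dB i.+1) = tgt (dB i) (P (dA i) (dB i))].

Definition pathfinder_wins (Sigma : finType) (A B : npta Sigma)
    (dA : nat -> transition A) (dB : nat -> transition B) : Prop :=
  ~ (trans_seq_acc dA /\ trans_seq_acc dB).

(* Main.v *)
Require Import Defs.
From mathcomp Require Import all_boot.
From mathcomp Require Import zify.
From Stdlib Require Import Classical ClassicalEpsilon.
Local Notation pref := Defs.prefix.
Set Implicit Arguments. Unset Strict Implicit. Unset Printing Implicit Defensive.

Lemma prefix_size pi n : size (pref pi n) = n.
Proof. by rewrite /Defs.prefix size_mkseq. Qed.

Lemma prefixS pi n : pref pi n.+1 = rcons (pref pi n) (pi n).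
Proof. by rewrite /Defs.prefix mkseqS. Qed.

Lemma nth_prefix pi n i : i < n -> nth DL (pref pi n) i = pi i.
Proof. by move=> h; rewrite /Defs.prefix nth_mkseq. Qed.

Lemma take_prefix pi n i : i <= n -> take i (pref pi n) = pref pi i.
Proof.
move=> h; apply: (@eq_from_nth _ DL).
  by rewrite size_takel prefix_size.
move=> j; rewrite size_takel ?prefix_size // => hj.
by rewrite nth_take // !nth_prefix //; lia.
Qed.

Lemma parity_shift (g : nat -> nat) K :
  parity_acc g -> parity_acc (fun n => g (n + K)).
Proof.
move=> [m [em [hinf [N hN]]]]; exists m; split => //; split.
  move=> M; have [n [h1 h2]] := hinf (M + K); exists (n - K); split; first lia.
  by rewrite subnK //; lia.
by exists N => n hn; apply: hN; lia.
Qed.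

Lemma parity_ev (g a : nat -> nat) N C :
  parity_acc g -> (forall n, N <= n -> a n = g (n - C)) -> parity_acc a.
Proof.
move=> [m [em [hinf [N' hN]]]] ha; exists m; split => //; split.
  move=> M; have [n [h1 h2]] := hinf (M + N); exists (n + C); split; first lia.
  by rewrite ha; [rewrite addnK | lia].
by exists (N + N' + C) => n hn; rewrite ha; [apply: hN|]; lia.
Qed.

Definition unb (c : nat -> nat) := forall k, exists n, k < c n.

Section Merge.
Variables (B : nat -> bool) (c1 c2 : nat -> nat).
Hypothesis c10 : c1 0 = 0.
Hypothesis c20 : c2 0 = 0.
Hypothesis c1S : forall n, c1 n.+1 = c1 n + B n.
Hypothesis c2S : forall n, c2 n.+1 = c2 n + ~~ B n.

Lemma c12 n : c1 n + c2 n = n.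
Proof. elim: n => [|n IH]; first by rewrite c10 c20. rewrite c1S c2S; case: (B n) => /=; lia. Qed.

Lemma c1mono n m : n <= m -> c1 n <= c1 m.
Proof. elim: m => [|m IH]; first by rewrite leqn0 => /eqP->. rewrite leq_eqVlt ltnS c1S. case/orP=> [/eqP->|/IH h]; [by rewrite ?c1S ?c2S | exact: leq_trans h (leq_addr _ _)]. Qed.
Lemma c2mono n m : n <= m -> c2 n <= c2 m.
Proof. elim: m => [|m IH]; first by rewrite leqn0 => /eqP->. rewrite leq_eqVlt ltnS c2S. case/orP=> [/eqP->|/IH h]; [by rewrite ?c1S ?c2S | exact: leq_trans h (leq_addr _ _)]. Qed.

End Merge.

Lemma c1hit (B : nat -> bool) (c1 : nat -> nat) (c10 : c1 0 = 0) (c1S : forall n, c1 n.+1 = c1 n + B n) k n : k < c1 n -> exists m, m < n /\ c1 m = k /\ B m.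
Proof.
elim: n => [|n IH]; first by rewrite c10.
case: (ltnP k (c1 n)) => h.
  by move=> _; have [m [? ?]] := IH h; exists m; split => //; lia.
rewrite c1S; case hb: (B n) => /= h2; last lia.
by exists n; split => //; split => //; lia.
Qed.

Lemma ev_const (c : nat -> nat) : (forall n, c n <= c n.+1) ->
  unb c \/ exists N, forall n, N <= n -> c n = c N.
Proof.
move=> hmono.
have mono : forall n m, n <= m -> c n <= c m.
  move=> n m; elim: m => [|m IH]; first by rewrite leqn0 => /eqP->.
  rewrite leq_eqVlt ltnS; case/orP=> [/eqP->//|/IH h]; exact: (leq_trans h).
case: (classic (exists N, forall n, N <= n -> c n = c N)) => [h|h]; [by right|left].
have h' : forall N, exists n, N <= n /\ c N < c n.
  move=> N; apply: NNPP => hn; apply: h; exists N => n hn'.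
  have h1 := mono N n hn'.
  case: (ltnP (c N) (c n)) => hl; last lia.
  by exfalso; apply: hn; exists n.
move=> k; elim: k => [|k [n hn]].
  by have [n [_ hn]] := h' 0; exists n; lia.
have [n' [_ hn']] := h' n; exists n'; lia.
Qed.

Lemma merge_one (B : nat -> bool) c1 c2 (a g1 : nat -> nat) :
  c1 0 = 0 -> c2 0 = 0 -> (forall n, c1 n.+1 = c1 n + B n) ->
  (forall n, c2 n.+1 = c2 n + ~~ B n) ->
  (forall n, B n -> a n = g1 (c1 n)) ->
  (exists N, forall n, N <= n -> c2 n = c2 N) ->
  (unb c1 -> parity_acc g1) -> parity_acc a.
Proof.
move=> c10 c20 c1S c2S ha [N hN] hg.
have hB : forall n, N <= n -> B n.
  move=> n hn; have := hN n.+1 (leqW hn); rewrite c2S hN //; case: (B n) => //=; lia.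
have hc1 : forall n, N <= n -> c1 n = n - c2 N.
  move=> n hn; have := c12 c10 c20 c1S c2S n; rewrite hN //; lia.
apply: (@parity_ev g1 a N (c2 N)).
  apply: hg => k; exists (k + N + c2 N).+1; rewrite hc1; lia.
by move=> n hn; rewrite ha ?hc1 //; exact: hB.
Qed.

Lemma merge (B : nat -> bool) c1 c2 (a g1 g2 : nat -> nat) :
  c1 0 = 0 -> c2 0 = 0 -> (forall n, c1 n.+1 = c1 n + B n) ->
  (forall n, c2 n.+1 = c2 n + ~~ B n) ->
  (forall n, a n = if B n then g1 (c1 n) else g2 (c2 n)) ->
  (unb c1 -> parity_acc g1) -> (unb c2 -> parity_acc g2) -> parity_acc a.
Proof.
move=> c10 c20 c1S c2S ha hg1 hg2.
have m1 : forall n, c1 n <= c1 n.+1 by move=> n; rewrite c1S; lia.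
have m2 : forall n, c2 n <= c2 n.+1 by move=> n; rewrite c2S; lia.
case: (ev_const m2) => [u2|e2].
  case: (ev_const m1) => [u1|e1]; last first.
    apply: (@merge_one (fun n => ~~ B n) c2 c1 a g2) => //.
      by move=> n; rewrite c1S negbK.
    by move=> n hb; rewrite ha (negbTE hb).
  have [k1 [ek1 [inf1 [N1 hN1]]]] := hg1 u1.
  have [k2 [ek2 [inf2 [N2 hN2]]]] := hg2 u2.
  exists (maxn k1 k2); split; first by rewrite /maxn; case: ltnP.
  split.
    move=> M; case: (leqP k2 k1) => hk.
      have [k [hk1 hk2]] := inf1 M; have [n' hn'] := u1 k.
      have [m [_ [hm hb]]] := c1hit c10 c1S hn'.
      exists m; split; first by have := c12 c10 c20 c1S c2S m; lia.
      by rewrite ha hb hm hk2; lia.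
    have [k [hk1 hk2]] := inf2 M; have [n' hn'] := u2 k.
    have /(c1hit (B:=fun n => ~~ B n)) : k < c2 n' by [].
    move=> /(_ c20 c2S) [m [_ [hm hb]]].
    exists m; split; first by have := c12 c10 c20 c1S c2S m; lia.
    by rewrite ha (negbTE hb) hm hk2; lia.
  have [n1 hn1] := u1 N1; have [n2 hn2] := u2 N2.
  exists (n1 + n2) => n hn; rewrite ha; case: (B n).
    have := c1mono c1S (_ : n1 <= n); have := hN1 (c1 n); lia.
  have := c2mono c2S (_ : n2 <= n); have := hN2 (c2 n); lia.
apply: (@merge_one B c1 c2 a g1) => //.
by move=> n hb; rewrite ha hb.
Qed.

Lemma limit (H : nat -> seq dir) : (forall n, exists w, H n.+1 = H n ++ w) ->
  exists pi, forall n, H n = pref pi (size (H n)).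
Proof.
move=> hS.
have mono : forall n m, n <= m -> exists w, H m = H n ++ w.
  move=> n; elim=> [|m IH]; first by rewrite leqn0 => /eqP->; exists [::]; rewrite cats0.
  rewrite leq_eqVlt ltnS; case/orP=> [/eqP->|/IH [w hw]]; first by exists [::]; rewrite cats0.
  by have [w' hw'] := hS m; exists (w ++ w'); rewrite hw' hw catA.
pose N k := match excluded_middle_informative (exists n, k < size (H n)) with
  | left h => proj1_sig (constructive_indefinite_description _ h) | right _ => 0 end.
have hN : forall k n, k < size (H n) -> k < size (H (N k)).
  move=> k n hk; rewrite /N; case: excluded_middle_informative => [h|h]; last first.
    by exfalso; apply: h; exists n.
  by case: constructive_indefinite_description.
exists (fun k => nth DL (H (N k)) k) => n.
apply: (@eq_from_nth _ DL); first by rewrite prefix_size.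
move=> i hi; rewrite nth_prefix //.
have hi' := hN _ _ hi.
case: (leqP n (N i)) => hle.
  by have [w ->] := mono _ _ hle; rewrite nth_cat hi.
by have [w ->] := mono _ _ (ltnW hle); rewrite nth_cat hi'.
Qed.

Section Game.
Variables (Sigma : finType) (A B : npta Sigma).

Definition tau := (transition A * transition B)%type.
Definition pos := (state A * state B)%type.

Definition valid (t : tau) := in_Delta (A:=A) t.1 /\ in_Delta (A:=B) t.2 /\ tlet t.1 = tlet t.2.
Definition srcp (t : tau) : pos := (tsrc t.1, tsrc t.2).
Definition tgt2 (t : tau) (d : dir) : pos := (tgt t.1 d, tgt t.2 d).
Definition allowed (F : tau -> option dir) (t : tau) (d : dir) :=
  forall d', F t = Some d' -> d = d'.
Definition cnode F (s : seq dir -> tau) (u : seq dir) :=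
  forall i, i < size u -> allowed F (s (take i u)) (nth DL u i).
Definition cbranch F (s : seq dir -> tau) (pi : nat -> dir) :=
  forall n, allowed F (s (pref pi n)) (pi n).
Definition acc2 (f : nat -> tau) :=
  trans_seq_acc (A:=A) (fun n => (f n).1) /\ trans_seq_acc (A:=B) (fun n => (f n).2).
Definition wf F (x : pos) (s : seq dir -> tau) :=
  srcp (s [::]) = x /\ forall u, cnode F s u ->
    valid (s u) /\ forall d, allowed F (s u) d -> srcp (s (rcons u d)) = tgt2 (s u) d.
Definition win F (s : seq dir -> tau) :=
  forall pi, cbranch F s pi -> acc2 (fun n => s (pref pi n)).
Definition AWin F x := exists s, wf F x s /\ win F s.

Definition pplay (P : transition A -> transition B -> dir) (x : pos)
   (dA : nat -> transition A) (dB : nat -> transition B) :=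
  (tsrc (dA 0), tsrc (dB 0)) = x /\
  forall i,
    [/\ in_Delta (dA i), in_Delta (dB i), tlet (dA i) = tlet (dB i),
        tsrc (dA i.+1) = tgt (dA i) (P (dA i) (dB i)) &
        tsrc (dB i.+1) = tgt (dB i) (P (dA i) (dB i))].
Definition PWin P x := forall dA dB, pplay P x dA dB -> pathfinder_wins dA dB.
Definition consistent (P : transition A -> transition B -> dir) (F : tau -> option dir) :=
  forall t d, F t = Some d -> P t.1 t.2 = d.
Definition Claim F := exists P, consistent P F /\ forall x, PWin P x \/ AWin F x.

Lemma cnode_nil F s : cnode F s [::].
Proof. by []. Qed.

Lemma cnode_rcons F s u d : cnode F s (rcons u d) <-> cnode F s u /\ allowed F (s u) d.
Proof.
split.
  move=> h; split.
    move=> i hi; have := h i; rewrite size_rcons nth_rcons hi -cats1 takel_cat; last exact: ltnW.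
    by apply; apply: ltnW.
  by have := h (size u); rewrite size_rcons ltnSn nth_rcons ltnn eqxx -cats1 take_size_cat //; apply.
move=> [h1 h2] i; rewrite size_rcons ltnS leq_eqVlt; case/orP=> [/eqP->|hi].
  by rewrite nth_rcons ltnn eqxx -cats1 take_size_cat.
by rewrite nth_rcons hi -cats1 takel_cat; [apply: h1|apply: ltnW].
Qed.

Lemma cbranch_cnode F s pi n : cbranch F s pi -> cnode F s (pref pi n).
Proof.
move=> hb; elim: n => [|n IH]; first by [].
by rewrite prefixS; apply/cnode_rcons.
Qed.

Lemma cnode_cat F s v w :
  cnode F s (v ++ w) <-> cnode F s v /\ cnode F (fun w => s (v ++ w)) w.
Proof.
elim/last_ind: w => [|w d IH]; first by rewrite cats0; split => [h|[]//]; split.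
rewrite -rcons_cat !cnode_rcons IH; tauto.
Qed.

Fixpoint pathP (P : transition A -> transition B -> dir) (s : seq dir -> tau) n :=
  match n with 0 => [::] | n.+1 => let u := pathP P s n in rcons u (P (s u).1 (s u).2) end.

Lemma contra P F x : consistent P F -> PWin P x -> AWin F x -> False.
Proof.
move=> hc hp [s [[h0 hwf] hwin]].
pose pi n := P (s (pathP P s n)).1 (s (pathP P s n)).2.
have hpre : forall n, pref pi n = pathP P s n.
  by elim=> [|n IH] //; rewrite prefixS IH.
have hb : cbranch F s pi.
  move=> n d' hF; rewrite hpre in hF *; rewrite /pi; exact: hc hF.
have [acA acB] := hwin pi hb.
apply: (hp (fun n => (s (pref pi n)).1) (fun n => (s (pref pi n)).2)) => //.
split; first by rewrite -h0.
move=> i; have [[hv1 [hv2 hv3]] hd] := hwf _ (cbranch_cnode (n:=i) hb).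
have := hd (pi i) (hb i); rewrite -prefixS /tgt2 => -[e1 e2].
split => //.
- by rewrite e1 !hpre.
- by rewrite e2 !hpre.
Qed.

Lemma acc2_ev (f g : nat -> tau) N C :
  acc2 f -> (forall n, N <= n -> g n = f (n - C)) -> acc2 g.
Proof.
move=> [h1 h2] he; split.
  apply: (parity_ev (N:=N) (C:=C) h1) => n hn /=; by rewrite he.
apply: (parity_ev (N:=N) (C:=C) h2) => n hn /=; by rewrite he.
Qed.

Lemma acc2_ext (f g : nat -> tau) : acc2 f -> (forall n, g n = f n) -> acc2 g.
Proof. move=> h he; apply: (acc2_ev (N:=0) (C:=0) h) => n _; by rewrite subn0. Qed.

Lemma acc2_shift (f : nat -> tau) K : acc2 f -> acc2 (fun n => f (n + K)).
Proof. by move=> [h1 h2]; split; [exact: (parity_shift K h1)|exact: (parity_shift K h2)]. Qed.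

Definition upd (F : tau -> option dir) (t0 : tau) (d : dir) : tau -> option dir :=
  fun t => if excluded_middle_informative (t = t0) then Some d else F t.

Lemma allowed_upd_eq F t0 d : allowed (upd F t0 d) t0 d.
Proof. rewrite /allowed /upd; case: excluded_middle_informative => [_ d' [->]//|[]//]. Qed.

Lemma allowed_upd_neq F t0 d t e : t <> t0 -> (allowed (upd F t0 d) t e <-> allowed F t e).
Proof. by move=> hne; rewrite /allowed /upd; case: excluded_middle_informative. Qed.

Lemma upd_some F t0 d t e : F t0 = None -> F t = Some e -> upd F t0 d t = Some e.
Proof.
move=> h0 h; rewrite /upd; case: excluded_middle_informative => // et.
by rewrite et h0 in h.
Qed.

Lemma base F : (forall t, F t <> None) -> Claim F.
Proof.
move=> hF; pose P := fun a b => odflt DL (F (a, b)).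
exists P; split; first by move=> [a b] e /= he; rewrite /P /= he.
move=> x; case: (classic (PWin P x)) => hp; [by left|right].
have [dA /not_all_ex_not [dB hdB]] := not_all_ex_not _ _ hp.
have [hpl hnw] : pplay P x dA dB /\ ~ pathfinder_wins dA dB.
  by split; [apply: NNPP => h; apply: hdB => /h|move=> h; apply: hdB => _].
have [accA accB] := NNPP _ hnw.
have [h0 hstep] := hpl.
exists (fun u => (dA (size u), dB (size u))); split.
  split; first by [].
  move=> u _; have [e1 e2 e3 e4 e5] := hstep (size u).
  split; first by split.
  move=> d hd; rewrite /srcp /tgt2 /= size_rcons.
  case hFv: (F (dA (size u), dB (size u))) => [d'|]; last by case: (hF _ hFv).
  have -> := hd _ hFv; move: e4 e5; rewrite /P /= hFv /= => -> ->; by [].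
move=> pi _; split.
  apply: (parity_ev (N:=0) (C:=0) accA) => n _; by rewrite /= prefix_size subn0.
apply: (parity_ev (N:=0) (C:=0) accB) => n _; by rewrite /= prefix_size subn0.
Qed.

Lemma residual F x s v : wf F x s -> win F s -> cnode F s v ->
  wf F (srcp (s v)) (fun w => s (v ++ w)) /\ win F (fun w => s (v ++ w)).
Proof.
move=> [h0 hwf] hwin hv; split.
  split; first by rewrite cats0.
  move=> w hw /=; have hvw : cnode F s (v ++ w) by apply/cnode_cat.
  have [hval hd] := hwf _ hvw; split => // d hd'.
  by rewrite -rcons_cat; apply: hd.
move=> pi' hb'.
pose pi'' n := if n < size v then nth DL v n else pi' (n - size v).
have hpre1 : forall k, pref pi'' (size v + k) = v ++ pref pi' k.
  elim=> [|k IH].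
    rewrite addn0 cats0; apply: (@eq_from_nth _ DL); first by rewrite prefix_size.
    by move=> i; rewrite prefix_size => hi; rewrite nth_prefix // /pi'' hi.
  rewrite addnS !prefixS IH rcons_cat /pi'' ltnNge leq_addr /=.
  by rewrite addKn.
have hpre2 : forall n, n <= size v -> pref pi'' n = take n v.
  by move=> n hn; rewrite -(take_prefix pi'' hn) -(addn0 (size v)) hpre1 cats0.
have hb : cbranch F s pi''.
  move=> n; case: (ltnP n (size v)) => hn.
    rewrite hpre2 ?(ltnW hn) // /pi'' hn; exact: hv.
  have -> : n = size v + (n - size v) by rewrite subnKC.
  rewrite hpre1 /pi'' ltnNge leq_addr /= addKn; exact: hb'.
apply: (acc2_ext (acc2_shift (size v) (hwin _ hb))) => n /=.
by rewrite addnC hpre1.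
Qed.

Section Reach.
Variables (F : tau -> option dir) (t0 : tau) (d : dir).
Hypothesis hF0 : F t0 = None.
Variable Pd : transition A -> transition B -> dir.
Hypothesis hcd : consistent Pd (upd F t0 d).
Hypothesis hpw : PWin Pd (tgt2 t0 d).

Lemma hit x s u : wf (upd F t0 d) x s -> win (upd F t0 d) s ->
  cnode (upd F t0 d) s u -> s u = t0 -> False.
Proof.
move=> hwf hwin hu e.
have hv : cnode (upd F t0 d) s (rcons u d).
  by apply/cnode_rcons; split => //; rewrite e; apply: allowed_upd_eq.
have [hwf' hwin'] := residual hwf hwin hv.
have hs : srcp (s (rcons u d)) = tgt2 t0 d.
  by rewrite (proj2 (proj2 hwf u hu) d) ?e //; apply: allowed_upd_eq.
rewrite hs in hwf'.
by apply: (contra hcd hpw); exists (fun w => s (rcons u d ++ w)).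
Qed.

Lemma nohit x s : wf (upd F t0 d) x s -> win (upd F t0 d) s ->
  forall u, cnode F s u -> cnode (upd F t0 d) s u /\ s u <> t0.
Proof.
move=> hwf hwin; elim/last_ind => [|u e IH].
  by move=> _; split => // h; apply: (hit hwf hwin _ h).
move/cnode_rcons=> [hu ha]; have [hu' hne] := IH hu.
have hc : cnode (upd F t0 d) s (rcons u e).
  by apply/cnode_rcons; split => //; apply/allowed_upd_neq.
by split => // h; apply: (hit hwf hwin hc h).
Qed.

Lemma reach_claim : (forall x, PWin Pd x \/ AWin (upd F t0 d) x) -> Claim F.
Proof.
move=> hall; exists Pd; split.
  move=> t e he; apply: hcd; apply: upd_some => //.
move=> x; case: (hall x) => [h|[s [hwf hwin]]]; [by left|right].
have hnh := nohit hwf hwin.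
exists s; split.
  split; first by case: hwf.
  move=> u hu; have [hu' hne] := hnh u hu.
  have [hv hd] := proj2 hwf u hu'; split => // e he; apply: hd.
  by apply/allowed_upd_neq.
move=> pi hb; apply: hwin => n.
have := cbranch_cnode (n:=n.+1) hb; rewrite prefixS => /hnh [/cnode_rcons [_ h] _].
exact: h.
Qed.
End Reach.

Lemma cnode_pref F s pi m k : cnode F s (pref pi m) -> k < m ->
  allowed F (s (pref pi k)) (pi k).
Proof.
move=> h hk; have := h k; rewrite prefix_size take_prefix ?nth_prefix //; [by apply|exact: ltnW].
Qed.

Definition isL (d : dir) := if d is DL then true else false.

Section Shuffle.
Variables (F : tau -> option dir) (t0 : tau).
Hypothesis hF0 : F t0 = None.
Variables (x : pos) (s0 s2 : seq dir -> tau).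
Hypothesis wf0 : wf (upd F t0 DL) x s0.
Hypothesis win0 : win (upd F t0 DL) s0.
Hypothesis wf2 : wf (upd F t0 DR) (tgt2 t0 DR) s2.
Hypothesis win2 : win (upd F t0 DR) s2.

Definition mstate := (bool * seq dir * seq dir)%type.
Definition cur (M : mstate) := if M.1.1 then s0 M.1.2 else s2 M.2.
Definition stepM (M : mstate) (d : dir) : mstate :=
  let: (b, h1, h2) := M in
  if excluded_middle_informative (cur M = t0) then
    (if b then (isL d, rcons h1 DL, h2) else (isL d, h1, rcons h2 DR))
  else (if b then (true, rcons h1 d, h2) else (false, h1, rcons h2 d)).
Definition runM (u : seq dir) := foldl stepM (true, [::], [::]) u.
Definition sh u := cur (runM u).

Definition Inv (M : mstate) :=
  cnode (upd F t0 DL) s0 M.1.2 /\ cnode (upd F t0 DR) s2 M.2 /\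
  (if M.1.1 then srcp (s2 M.2) = tgt2 t0 DR else srcp (s0 M.1.2) = tgt2 t0 DL).

Lemma inv_valid M : Inv M -> valid (cur M).
Proof.
case: M => [[b h1] h2] [/= c1 [/= c2 _]]; rewrite /cur /=; case: b.
  exact: (proj1 (proj2 wf0 _ c1)).
exact: (proj1 (proj2 wf2 _ c2)).
Qed.

Lemma inv_step M d : Inv M -> allowed F (cur M) d ->
  Inv (stepM M d) /\ srcp (cur (stepM M d)) = tgt2 (cur M) d.
Proof.
case: M => [[b h1] h2] [/= c1 [/= c2 hi]] ha; rewrite /stepM.
case: excluded_middle_informative => e; move: e ha hi; rewrite /cur /=.
- case: b => e ha hi.
    have a1 : allowed (upd F t0 DL) (s0 h1) DL by rewrite e; apply: allowed_upd_eq.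
    have c1' : cnode (upd F t0 DL) s0 (rcons h1 DL) by apply/cnode_rcons.
    have s1 : srcp (s0 (rcons h1 DL)) = tgt2 t0 DL by rewrite (proj2 (proj2 wf0 _ c1) _ a1) e.
    by clear ha; case: d => /=; rewrite /Inv /= e.
  have a1 : allowed (upd F t0 DR) (s2 h2) DR by rewrite e; apply: allowed_upd_eq.
  have c2' : cnode (upd F t0 DR) s2 (rcons h2 DR) by apply/cnode_rcons.
  have s1 : srcp (s2 (rcons h2 DR)) = tgt2 t0 DR by rewrite (proj2 (proj2 wf2 _ c2) _ a1) e.
  by clear ha; case: d => /=; rewrite /Inv /= e.
- case: b => e ha hi.
    have a1 : allowed (upd F t0 DL) (s0 h1) d by apply/allowed_upd_neq.
    have c1' : cnode (upd F t0 DL) s0 (rcons h1 d) by apply/cnode_rcons.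
    by rewrite /Inv /= (proj2 (proj2 wf0 _ c1) _ a1).
  have a1 : allowed (upd F t0 DR) (s2 h2) d by apply/allowed_upd_neq.
  have c2' : cnode (upd F t0 DR) s2 (rcons h2 d) by apply/cnode_rcons.
  by rewrite /Inv /= (proj2 (proj2 wf2 _ c2) _ a1).
Qed.

Lemma runM_rcons u d : runM (rcons u d) = stepM (runM u) d.
Proof. by rewrite /runM foldl_rcons. Qed.

Lemma inv_run u : cnode F sh u -> Inv (runM u).
Proof.
elim/last_ind: u => [|u d IH].
  by move=> _; rewrite /Inv /= (proj1 wf2).
move/cnode_rcons=> [hu ha]; rewrite runM_rcons.
exact: (proj1 (inv_step (IH hu) ha)).
Qed.

Lemma sh_wf : wf F x sh.
Proof.
split; first by rewrite /sh /runM /cur /= (proj1 wf0).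
move=> u hu; have hI := inv_run hu; split; first exact: inv_valid.
move=> d hd; rewrite /sh runM_rcons; exact: (proj2 (inv_step hI hd)).
Qed.

Lemma step_struct M d :
  if M.1.1 then (exists e, (stepM M d).1.2 = rcons M.1.2 e) /\ (stepM M d).2 = M.2
  else (stepM M d).1.2 = M.1.2 /\ exists e, (stepM M d).2 = rcons M.2 e.
Proof.
case: M => [[b h1] h2]; case: b; rewrite /stepM /=;
  case: excluded_middle_informative => _ /=; split => //; eexists; reflexivity.
Qed.

Lemma sh_win : win F sh.
Proof.
move=> pi hb.
pose M n := runM (pref pi n).
have hM : forall n, M n.+1 = stepM (M n) (pi n) by move=> n; rewrite /M prefixS runM_rcons.
have hI : forall n, Inv (M n) by move=> n; apply: inv_run; exact: cbranch_cnode.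
pose c1 n := size (M n).1.2.
pose c2 n := size (M n).2.
have hS : forall n, c1 n.+1 = c1 n + (M n).1.1 /\ c2 n.+1 = c2 n + ~~ (M n).1.1.
  move=> n; rewrite /c1 /c2 hM; have := step_struct (M n) (pi n).
  case: ((M n).1.1) => [[[e ->] ->]|[-> [e ->]]]; by rewrite size_rcons addn0 addn1.
have [pi1 hpi1] : exists pi1, forall n, (M n).1.2 = pref pi1 (c1 n).
  apply: limit => n; rewrite hM; have := step_struct (M n) (pi n).
  case: ((M n).1.1) => [[[e ->] _]|[-> _]]; [exists [:: e]; by rewrite cats1|exists [::]; by rewrite cats0].
have [pi2 hpi2] : exists pi2, forall n, (M n).2 = pref pi2 (c2 n).
  apply: limit => n; rewrite hM; have := step_struct (M n) (pi n).
  case: ((M n).1.1) => [[_ ->]|[_ [e ->]]]; [exists [::]; by rewrite cats0|exists [:: e]; by rewrite cats1].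
have c10 : c1 0 = 0 by [].
have c20 : c2 0 = 0 by [].
have cb1 : unb c1 -> cbranch (upd F t0 DL) s0 pi1.
  move=> u k; have [n hn] := u k; have := (proj1 (hI n)); rewrite hpi1 => h.
  exact: (cnode_pref h hn).
have cb2 : unb c2 -> cbranch (upd F t0 DR) s2 pi2.
  move=> u k; have [n hn] := u k; have := (proj1 (proj2 (hI n))); rewrite hpi2 => h.
  exact: (cnode_pref h hn).
have hsh : forall n, sh (pref pi n) =
    if (M n).1.1 then s0 (pref pi1 (c1 n)) else s2 (pref pi2 (c2 n)).
  by move=> n; rewrite /sh -/(M n) /cur -hpi1 -hpi2.
split.
  apply: (@merge (fun n => (M n).1.1) c1 c2 _ (fun k => Omega (tsrc (s0 (pref pi1 k)).1))
     (fun k => Omega (tsrc (s2 (pref pi2 k)).1))) => //.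
  - by move=> n; case: (hS n).
  - by move=> n; case: (hS n).
  - by move=> n; rewrite hsh; case: ((M n).1.1).
  - by move=> u; exact: (proj1 (win0 (cb1 u))).
  - by move=> u; exact: (proj1 (win2 (cb2 u))).
apply: (@merge (fun n => (M n).1.1) c1 c2 _ (fun k => Omega (tsrc (s0 (pref pi1 k)).2))
   (fun k => Omega (tsrc (s2 (pref pi2 k)).2))) => //.
- by move=> n; case: (hS n).
- by move=> n; case: (hS n).
- by move=> n; rewrite hsh; case: ((M n).1.1).
- by move=> u; exact: (proj2 (win0 (cb1 u))).
- by move=> u; exact: (proj2 (win2 (cb2 u))).
Qed.

Lemma shuffle : AWin F x.
Proof. exists sh; split; [exact: sh_wf|exact: sh_win]. Qed.
End Shuffle.

Local Notation code := ((state A * Sigma * state A * state A) * (state B * Sigma * state B * state B))%type.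
Definition decode (k : code) : tau :=
  let: ((q, a, l, r), (q', a', l', r')) := k in (Trans q a l r, Trans q' a' l' r').
Fixpoint inl (t : tau) (l : seq tau) : Prop :=
  if l is x :: l' then x = t \/ inl t l' else False.
Definition alltaus := map decode (enum {: code}).

Lemma inl_all t : inl t alltaus.
Proof.
have [k <-] : exists k, decode k = t.
  by case: t => [[q a l r] [q' a' l' r']]; exists ((q, a, l, r), (q', a', l', r')).
rewrite /alltaus; have : k \in enum {: code} by rewrite mem_enum.
elim: (enum _) => [|y s IH] //; rewrite in_cons; case/orP=> [/eqP->|/IH h]; [by left|by right].
Qed.

Lemma claim_all (l : seq tau) : forall F, (forall t, F t = None -> inl t l) -> Claim F.
Proof.
elim: l => [|t0 l IH] F hF.
  by apply: base => t h; apply: (hF t h).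
case hF0: (F t0) => [e|].
  apply: IH => t ht; case: (hF t ht) => // et; by rewrite -et hF0 in ht.
have hF1 : forall d t, upd F t0 d t = None -> inl t l.
  move=> d t; rewrite /upd; case: excluded_middle_informative => [//|ne] ht.
  by case: (hF t ht) => // e; case: (ne (esym e)).
have [P1 [hc1 h1]] := IH _ (hF1 DL).
have [P2 [hc2 h2]] := IH _ (hF1 DR).
case: (classic (PWin P2 (tgt2 t0 DR))) => hp.
  exact: (reach_claim hF0 hc2 hp h2).
have [s2 [wf2 win2]] : AWin (upd F t0 DR) (tgt2 t0 DR) by case: (h2 (tgt2 t0 DR)).
exists P1; split.
  by move=> t e he; apply: hc1; apply: upd_some.
move=> x; case: (h1 x) => [h|[s0 [wf0 win0]]]; [by left|right].
exact: (shuffle wf0 win0 wf2 win2).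
Qed.
End Game.

Theorem mainTheorem3 (Sigma : finType) (A B : npta Sigma) :
  productive A -> productive B ->
  (forall t : tree Sigma, ~ (accepts A t /\ accepts B t)) ->
  exists P : transition A -> transition B -> dir,
    forall (dA : nat -> transition A) (dB : nat -> transition B),
      play_following P dA dB -> pathfinder_wins dA dB.
Proof.
move=> _ _ hdis.
have [P [_ hP]] := @claim_all Sigma A B (alltaus A B) (fun _ => None) (fun t _ => inl_all t).
exists P => dA dB hpl.
case: (hP (q0 A, q0 B)) => [h|[s [[h0 hwf] hwin]]].
  by case: hpl => [e1 [e2 hi]]; apply: h; split; [rewrite e1 e2|exact: hi].
exfalso.
have hcn : forall u, cnode (fun _ => None) s u by move=> u i _ d'.
have hcb : forall pi, cbranch (fun _ => None) s pi by move=> pi n d'.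
apply: (hdis (fun u => tlet (s u).1)); split.
  exists (fun u => tsrc (s u).1); split.
    split; first by rewrite -[q0 A]/((q0 A, q0 B).1) -h0.
    move=> u; have [[v1 [v2 v3]] hd] := hwf u (hcn u).
    have [eL1 eL2] := hd DL (fun d' h => ltac:(discriminate)).
    have [eR1 eR2] := hd DR (fun d' h => ltac:(discriminate)).
    by rewrite eL1 eR1.
  by move=> pi; exact: (proj1 (hwin pi (hcb pi))).
exists (fun u => tsrc (s u).2); split.
  split; first by rewrite -[q0 B]/((q0 A, q0 B).2) -h0.
  move=> u; have [[v1 [v2 v3]] hd] := hwf u (hcn u).
  have [eL1 eL2] := hd DL (fun d' h => ltac:(discriminate)).
  have [eR1 eR2] := hd DR (fun d' h => ltac:(discriminate)).
  by rewrite eL2 eR2 v3.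
by move=> pi; exact: (proj2 (hwin pi (hcb pi))).
Qed.
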